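(* Let $B=(B,+,0)$ be a unitary magma and $(X,\varphi)$ a $B$-action. Then $(X,\varphi(-,0,-,0),0)$, i.e. $X$ with operation $x+x'=\varphi(x,0,x',0)$ and neutral element $0$, is a unitary magma, and $$X\xrightarrow{\langle 1,0\rangle} X\rtimes_\varphi B \underset{\langle 0,1\rangle}{\overset{\pi_B}{\rightleftarrows}} B$$ is a split extension of unitary magmas: the maps $\langle1,0\rangle(x)=(x,0)$, $\pi_B(x,b)=b$ and $\langle 0,1\rangle(b)=(0,b)$ are well-defined morphisms of unitary magmas, $\pi_B\langle0,1\rangle=1_B$, and $\langle 1,0\rangle$ is a kernel of $\pi_B$. Moreover, for $(x,b)\in X\times B$, one has $(x,b)\in X\rtimes_\varphi B$ if and only if $(x,b)=(x,0)+(0,b)$, where the sum is given by $(x,b)+(x',b')=(\varphi(x,b,x',b'),b+b')$.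
   Context: A unitary magma is a set with a binary operation $+$ and an element $0$ with $b+0=b=0+b$ for all $b$; morphisms preserve $+$ and $0$. A $B$-action is a pair $(X,\varphi)$ with $X$ a set and $\varphi\colon X\times B\times X\times B\to X$ a map such that: (1) there is an element $0\in X$ with $\varphi(x,0,0,0)=x=\varphi(0,0,x,0)$ for all $x\in X$; (2) $\varphi(x,b,0,0)=\varphi(x,0,0,b)=\varphi(0,0,x,b)$ for all $x\in X,b\in B$; (3) $\varphi(0,b,0,b')=0$ for all $b,b'\in B$; (4) writing $\varphi_{00}(x,b)=\varphi(x,0,0,b)$, for all $x,x'\in X$, $b,b'\in B$: $\varphi(x,b,x',b')=\varphi_{00}\big(\varphi(\varphi_{00}(x,b),b,\varphi_{00}(x',b'),b'),\,b+b'\big)$. The semidirect product $X\rtimes_\varphi B$ is the set $\{(x,b)\in X\times B\mid\varphi(x,0,0,b)=x\}$ with operation $(x,b)+(x',b')=(\varphi(x,b,x',b'),b+b')$ and neutral element $(0,0)$ (it is a unitary magma). *)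

(* Defs.v *)
Set Implicit Arguments.

Definition unitary_magma (M : Type) (add : M -> M -> M) (z : M) : Prop :=
  forall m, add m z = m /\ add z m = m.

Definition umagma_morph (M N : Type) (addM : M -> M -> M) (zM : M)
  (addN : N -> N -> N) (zN : N) (f : M -> N) : Prop :=
  (forall a b, f (addM a b) = addN (f a) (f b)) /\ f zM = zN.

Definition is_action (B : Type) (addB : B -> B -> B) (zB : B)
  (X : Type) (phi : X -> B -> X -> B -> X) (zX : X) : Prop :=
  (forall x, phi x zB zX zB = x /\ phi zX zB x zB = x) /\
  (forall x b, phi x b zX zB = phi x zB zX b /\ phi x zB zX b = phi zX zB x b) /\
  (forall b b', phi zX b zX b' = zX) /\
  (forall x x' b b',
     phi x b x' b' =
     phi (phi (phi x zB zX b) b (phi x' zB zX b') b') zB zX (addB b b')).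

Definition sdp_mem (B X : Type) (zB : B) (zX : X)
  (phi : X -> B -> X -> B -> X) (p : X * B) : Prop :=
  phi (fst p) zB zX (snd p) = fst p.

Definition sdp_add (B X : Type) (addB : B -> B -> B)
  (phi : X -> B -> X -> B -> X) (p q : X * B) : X * B :=
  (phi (fst p) (snd p) (fst q) (snd q), addB (snd p) (snd q)).

Definition act_add (B X : Type) (zB : B) (phi : X -> B -> X -> B -> X)
  (x x' : X) : X := phi x zB x' zB.

(* Main.v *)
Require Import Defs.

Theorem proposition4p1
  (B : Type) (addB : B -> B -> B) (zB : B)
  (X : Type) (phi : X -> B -> X -> B -> X) (zX : X)
  (HB : unitary_magma addB zB)
  (Hphi : is_action addB zB phi zX) :
  (* X with x + x' = phi(x,0,x',0) and 0 is a unitary magma *)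
  unitary_magma (act_add zB phi) zX /\
  (* the semidirect product is a well-defined unitary magma *)
  (sdp_mem zB zX phi (zX, zB) /\
   (forall p q, sdp_mem zB zX phi p -> sdp_mem zB zX phi q ->
      sdp_mem zB zX phi (sdp_add addB phi p q)) /\
   (forall p, sdp_mem zB zX phi p ->
      sdp_add addB phi p (zX, zB) = p /\ sdp_add addB phi (zX, zB) p = p)) /\
  (* <1,0> : X -> X ⋊ B is a well-defined morphism *)
  ((forall x, sdp_mem zB zX phi (x, zB)) /\
   (forall x x', (act_add zB phi x x', zB) = sdp_add addB phi (x, zB) (x', zB))) /\
  (* pi_B : X ⋊ B -> B is a morphism *)
  ((forall p q, sdp_mem zB zX phi p -> sdp_mem zB zX phi q ->
      snd (sdp_add addB phi p q) = addB (snd p) (snd q)) /\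
   snd (zX, zB) = zB) /\
  (* <0,1> : B -> X ⋊ B is a well-defined morphism *)
  ((forall b, sdp_mem zB zX phi (zX, b)) /\
   (forall b b', sdp_add addB phi (zX, b) (zX, b') = (zX, addB b b'))) /\
  (* pi_B <0,1> = 1_B *)
  (forall b : B, snd (zX, b) = b) /\
  (* <1,0> is a kernel of pi_B (universal property in unitary magmas) *)
  (
   forall (Y : Type) (addY : Y -> Y -> Y) (zY : Y) (f : Y -> X * B),
     unitary_magma addY zY ->
     (forall y, sdp_mem zB zX phi (f y)) ->
     (forall y y', f (addY y y') = sdp_add addB phi (f y) (f y')) ->
     f zY = (zX, zB) ->
     (forall y, snd (f y) = zB) ->
     exists g : Y -> X,
       (umagma_morph addY zY (act_add zB phi) zX g /\
        forall y, (g y, zB) = f y) /\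
       (forall g' : Y -> X,
          umagma_morph addY zY (act_add zB phi) zX g' ->
          (forall y, (g' y, zB) = f y) -> forall y, g' y = g y)) /\
  (* membership characterization *)
  (forall x b, sdp_mem zB zX phi (x, b) <->
               (x, b) = sdp_add addB phi (x, zB) (zX, b)).
Proof.
  destruct Hphi as [A1 [A2 [A3 A4]]].
  assert (Z0 : addB zB zB = zB) by apply (proj1 (HB zB)).
  assert (F0 : forall x, phi x zB zX zB = x) by (intro; apply A1).
  assert (Idem : forall x c, phi (phi x zB zX c) zB zX c = phi x zB zX c).
  { intros x c. pose proof (A4 x zX zB c) as H.
    rewrite (F0 x), (A3 zB c), (proj2 (HB c)) in H.
    exact (eq_sym H). }
  assert (Img : forall x b x' b', phi (phi x b x' b') zB zX (addB b b') = phi x b x' b').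
  { intros. rewrite (A4 x x' b b'). apply Idem. }
  unfold sdp_mem, sdp_add, act_add, unitary_magma, umagma_morph in *; simpl.
  split; [intro m; split; [apply A1|apply A1]|].
  split; [split; [apply A1|split]|].
  { intros [x b] [x' b'] _ _; simpl. apply Img. }
  { intros [x b] Hp; simpl in *. split.
    - rewrite (proj1 (A2 x b)), Hp, (proj1 (HB b)); reflexivity.
    - rewrite <- (proj2 (A2 x b)), Hp, (proj2 (HB b)); reflexivity. }
  split; [split; [intro; apply A1|intros; rewrite Z0; reflexivity]|].
  split; [split; [reflexivity|reflexivity]|].
  split; [split; [intro; apply A3|intros; rewrite A3; reflexivity]|].
  split; [reflexivity|].
  split.
  { intros Y addY zY f HY Hm Hadd Hz Hs.
    assert (Ef : forall y, f y = (fst (f y), zB)).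
    { intro y. rewrite <- (Hs y). destruct (f y); reflexivity. }
    exists (fun y => fst (f y)). split; [split; [split|]|].
    - intros a b. rewrite Hadd. simpl. rewrite (Hs a), (Hs b). reflexivity.
    - rewrite Hz. reflexivity.
    - intro y. symmetry. apply Ef.
    - intros g' _ Hg y. rewrite <- (Hg y). reflexivity. }
  intros x b. simpl. rewrite (proj2 (HB b)). split.
  - intro H. rewrite H. reflexivity.
  - intro H. injection H. intro E. symmetry. exact E.
Qed.
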